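(* Let $k\ge 1$ be an integer and let $G$ be a $k$-regular graph. Then $G$ has a $k$-conversion set of size $k$ (that is, $c_k(G)=k$) if and only if $G=H\vee\overline{K_{k-t}}$, where $H$ is a $t$-regular graph of order $k$ and $0\le t<k$.
   Context: For a graph $G=(V,E)$, a positive integer $k$ and a set $S_0\subseteq V$, the irreversible $k$-threshold conversion process is defined by: for $t=1,2,\dots$, $S_t$ is obtained from $S_{t-1}$ by adjoining all vertices having at least $k$ neighbours in $S_{t-1}$. The set $S_0$ is a $k$-conversion set of $G$ if $S_t=V(G)$ for some $t\ge 0$. The $k$-conversion number $c_k(G)$ is the minimum size of a $k$-conversion set of $G$. For graphs $G,H$, $G\vee H$ denotes the join (disjoint union plus all edges between $G$ and $H$), and $\overline{K_m}$ is the edgeless graph on $m$ vertices. *)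

(* Defs.v *)
From mathcomp Require Import all_boot.
Set Implicit Arguments. Unset Strict Implicit. Unset Printing Implicit Defensive.

Definition simple_graph (T : finType) (e : rel T) : Prop :=
  symmetric e /\ irreflexive e.

Definition regular (T : finType) (e : rel T) (r : nat) : Prop :=
  forall x : T, #|[set y | e x y]| = r.

Definition conv_step (T : finType) (e : rel T) (k : nat) (S : {set T}) : {set T} :=
  S :|: [set x | k <= #|[set y in S | e x y]|].

Definition conversion_set (T : finType) (e : rel T) (k : nat) (S0 : {set T}) : Prop :=
  exists t : nat, iter t (conv_step e k) S0 = [set: T].

Definition join_rel (T1 T2 : finType) (e1 : rel T1) (e2 : rel T2) : rel (T1 + T2) :=
  fun u v => match u, v with
             | inl a, inl b => e1 a b
             | inr a, inr b => e2 a b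
             | _, _ => true
             end.

Definition edgeless (m : nat) : rel 'I_m := fun _ _ => false.

Definition isomorphic (T1 T2 : finType) (e1 : rel T1) (e2 : rel T2) : Prop :=
  exists f : T1 -> T2, bijective f /\ forall x y, e1 x y = e2 (f x) (f y).

(* Main.v *)
Require Import Defs.
From mathcomp Require Import all_boot.
From mathcomp Require Import zify.

Lemma key (T : finType) (e : rel T) k (S0 : {set T}) :
  symmetric e -> regular e k -> #|S0| = k -> conversion_set e k S0 ->
  forall x, x \notin S0 -> forall y, e x y = (y \in S0).
Proof.
move=> sym reg cS [t ht].
have inv : forall n, S0 \subset iter n (conv_step e k) S0 /\
   (forall x, x \in iter n (conv_step e k) S0 -> x \notin S0 -> forall y, e x y -> y \in S0).
  elim=> [|n [IH1 IH2]] /=.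
    split; first exact: subxx.
    by move=> x H H'; rewrite H in H'.
  set S := iter n _ S0 in IH1 IH2 *.
  split; first by apply: subset_trans IH1 _; apply: subsetUl.
  move=> x; rewrite /conv_step inE => /orP[xS|]; first exact: IH2.
  rewrite inE => hk xS0 y exy.
  have sub : [set y in S | e x y] \subset [set y | e x y].
    by apply/subsetP=> z; rewrite !inE => /andP[].
  have eqS : [set y in S | e x y] = [set y | e x y].
    by apply/eqP; rewrite eqEcard sub /= reg.
  have yS : y \in S.
    have : y \in [set y | e x y] by rewrite inE.
    by rewrite -eqS inE => /andP[].
  case: (boolP (y \in S0)) => // yS0.
  have := IH2 y yS yS0 x; rewrite sym exy => /(_ isT) xS0'.
  by rewrite xS0' in xS0.
move=> x xS0 y.
have [_ H] := inv t; rewrite ht in H.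
have sub : [set y | e x y] \subset S0.
  by apply/subsetP=> z; rewrite inE; exact: H x (in_setT x) xS0 z.
have : [set y | e x y] = S0 by apply/eqP; rewrite eqEcard sub reg cS leqnn.
by move=> <-; rewrite inE.
Qed.

Definition isl {A B : Type} (u : A + B) : bool := if u is inl _ then true else false.

Theorem proposition2p2 (k : nat) (T : finType) (e : rel T) :
  1 <= k -> simple_graph e -> regular e k ->
  ((exists S0 : {set T}, #|S0| = k /\ conversion_set e k S0) <->
   (exists t : nat, t < k /\
      exists (TH : finType) (eH : rel TH),
        simple_graph eH /\ #|TH| = k /\ regular eH t /\
        isomorphic e (join_rel eH (@edgeless (k - t))))).
Proof.
move=> k1 [sym irr] reg; split.
  case=> S0 [cS conv].
  have K := @key T e k S0 sym reg cS conv.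
  have K' : forall s y, s \in S0 -> y \notin S0 -> e s y by move=> s y sS yS; rewrite sym K.
  set m := #|~: S0|.
  have hC : k + m = #|T| by rewrite -cS cardsC.
  have [x0 x0S] : exists x0, x0 \in S0.
    by apply/set0Pn; rewrite -card_gt0 cS.
  have hT : k < #|T|.
    have := max_card (mem (x0 |: [set y | e x0 y])).
    by rewrite cardsU1 reg inE irr.
  have m1 : 0 < m by lia.
  have hs : forall s, s \in S0 -> #|[set y in S0 | e s y]| + m = k.
    move=> s sS; rewrite -(reg s) -(cardsID S0 [set y | e s y]).
    rewrite /m; congr (_ + _); apply: eq_card => y; rewrite !inE.
      by rewrite andbC.
    by case yS: (y \in S0) => //=; rewrite K' ?yS.
  have mk : m <= k by have := hs x0 x0S; lia.
  exists (k - m); split; first lia.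
  have E : k - (k - m) = m by lia.
  rewrite E.
  pose TH := {x : T | x \in S0}.
  pose eH := fun a b : TH => e (val a) (val b).
  exists TH, eH.
  split; first by split; [move=> a b; exact: sym | move=> a; exact: irr].
  split; first by rewrite card_sig cS.
  split.
    move=> a; rewrite -(hs (val a) (valP a)) addnK.
    rewrite -(card_imset _ val_inj); apply: eq_card => y.
    rewrite !inE; apply/imsetP/idP.
      by case=> b; rewrite inE => hb ->; rewrite (valP b).
    case/andP=> yS hy; exists (exist _ y yS) => //; by rewrite inE.
  pose g := fun u : (TH + 'I_m)%type => match u with inl a => val a | inr j => @enum_val T (mem (~: S0)) j end.
  have gA : forall j, g (inr j) \notin S0.
    by move=> j; have := enum_valP j; rewrite inE.
  have ginj : injective g.
    case=> [a|i] [b|j] /= h.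
    - by congr inl; apply: val_inj.
    - by have := gA j; rewrite /= -h (valP a).
    - by have := gA i; rewrite /= h (valP b).
    - by congr inr; apply: enum_val_inj.
  have gbij : bijective g.
    apply: (@inj_card_bij _ T g ginj); rewrite card_sum card_sig card_ord -hC -cS; apply: eq_leq; congr (_ + _); apply: eq_card.
  have [f gf fg] := gbij.
  exists f; split; first by exists g.
  have ge : forall u v, e (g u) (g v) = join_rel eH (@edgeless m) u v.
    case=> [a|i] [b|j] //=.
    - exact: K' (valP a) (gA j).
    - by rewrite K ?(gA i) //; exact: (valP b).
    - by rewrite K ?gA // (negbTE (gA j)).
  by move=> x y; rewrite -ge !fg.
case=> t [tk [TH [eH [_ [cTH [_ [f [fbij fe]]]]]]]].
set S0 := [set x | isl (f x)].
have cS : #|S0| = k.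
  have -> : S0 = f @^-1: [set u | isl u] by apply/setP=> x; rewrite !inE.
  rewrite on_card_preimset; last exact: onW_bij.
  have -> : [set u : (TH + 'I_(k - t))%type | isl u] = inl @: [set: TH].
    apply/setP=> -[a|j]; rewrite inE /=.
      by apply/esym/imsetP; exists a; rewrite ?inE.
    by apply/esym/imsetP=> -[a _].
  by rewrite card_imset ?cardsT //; move=> a b [].
exists S0; split=> //; exists 1 => /=.
apply/setP=> x; rewrite /conv_step !inE.
case fx: (f x) => [a|j]; first by [].
apply/orP; right; rewrite -cS.
apply: subset_leq_card; apply/subsetP=> y yS; rewrite inE yS /= fe fx.
by move: yS; rewrite inE; case: (f y).
Qed.
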